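(* Let $\theta=(\tau,\ell)\in\mathscr S$, let $\eta\in\{0,1\}$, let $q=\Phi(\theta,\eta)$, and let $\gamma$ be a proper geodesic ray of $q$ emanating from $\varnothing$. Then: 1. If $c$ is a corner incident to $\gamma(i)$ lying on the left-hand side of $\tau$, then $c^{\gamma_{\max}}(i)\le c\le c^{\gamma_{\min}}(i)$. 2. For every $i\ge0$, the vertices $\gamma(i+1),\gamma(i+2),\dots$ do not belong to $[[\varnothing,\gamma(i)]]$. 3. For every $i\ge0$, if $\gamma(i)$ is incident to the left-hand side of $\tau$, then there exists a unique $j\le i$ such that $[[\varnothing,\gamma(i)]]$ contains $\gamma_{\min}(j)$ and $[[\gamma_{\min}(j),\gamma(i)]]\setminus\{\gamma_{\min}(j)\}$ does not intersect the spine of $\tau$.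
   Context: **The set $\mathscr S$.** It is the set of infinite labeled plane trees with root label 0, integer labels differing by at most 1 along edges, exactly one spine $\varnothing=S(0),S(1),\dots$, and $\inf_i\ell(S(i))=-\infty$. $[[a,b]]$ denotes the vertex set of the path from $a$ to $b$ in $\tau$. **Corners and sides.** The left-hand side of $\tau$ consists of the spine and the subtrees grafted to its left. Corners are indexed by $\mathbb Z$: $c_0,c_1,\dots$ are the left-side corners in clockwise contour order from the root corner $c_0$, and $c_{-1},c_{-2},\dots$ are the right-side corners in counterclockwise order. Corners are ordered by index. The successor $\mathcal S(c_i)$ is the first $c_j$, $j>i$, with $\ell(c_j)=\ell(c_i)-1$. $\mathcal V(c)$ is the vertex of corner $c$. **The quadrangulation $\Phi(\theta,\eta)$.** It has vertex set $V(\tau)$ and edges the arcs from each corner to its successor. It is rooted at the arc from $c_0$ to its successor, with orientation reversed iff $\eta=1$. **Proper geodesic rays.** A proper geodesic ray emanating from $\varnothing$ is an infinite path $(\gamma(0)=\varnothing,\gamma(1),\dots)$ with $\ell(\gamma(i))=-i$. Each of its steps from $\gamma(i)$ to $\gamma(i+1)$ is an arc from a corner $c^\gamma(i)$ incident to $\gamma(i)$ to its successor. **Maximal and minimal geodesics.** The maximal geodesic is $\gamma_{\max}(i)=\mathcal V(\mathcal S^{(i)}(c_0))$, with $c^{\gamma_{\max}}(i)=\mathcal S^{(i)}(c_0)$. The minimal geodesic is given by $\gamma_{\min}(0)=\varnothing$, where $c^{\gamma_{\min}}(n)$ is the last corner among $c_0,c_1,\dots$ incident to $\gamma_{\min}(n)$,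 and $\gamma_{\min}(n+1)=\mathcal V(\mathcal S(c^{\gamma_{\min}}(n)))$. *)

(* Defs.v *)
From mathcomp Require Import all_boot all_order all_algebra.
From Stdlib Require Import ClassicalEpsilon.
Set Implicit Arguments. Unset Strict Implicit. Unset Printing Implicit Defensive.
Import Order.TTheory GRing.Theory Num.Theory.
Local Open Scope ring_scope.

(* ---------- Plane trees (Ulam-Harris / Neveu formalism) ----------
   A (locally finite) plane tree is given by nch : seq nat -> nat, the number
   of children of each word; the children of u are rcons u 0, ..., rcons u (nch u).-1
   in left-to-right order.  Vertices are the words reachable from the root [::]. *)
Definition vertex := seq nat.

Definition vtx (nch : vertex -> nat) (u : vertex) : bool :=
  all (fun i => (nth 0%N u i < nch (take i u))%N) (iota 0 (size u)).

Definition is_ray (nch : vertex -> nat) (r : nat -> vertex) : Prop :=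
  r 0%N = [::] /\
  forall n, exists j, (j < nch (r n))%N /\ r n.+1 = rcons (r n) j.

Definition in_S (nch : vertex -> nat) (lab : vertex -> int) : Prop :=
  lab [::] = 0 /\
  (forall u j, vtx nch u -> (j < nch u)%N -> `|lab (rcons u j) - lab u| <= 1) /\
  (exists S : nat -> vertex,
      is_ray nch S /\
      (forall S', is_ray nch S' -> forall n, S' n = S n) /\
      (forall M : int, exists n, lab (S n) < M)).

(* vertex on the spine (= on some, hence the unique, infinite ray) *)
Definition on_spine (nch : vertex -> nat) (x : vertex) : Prop :=
  exists S, is_ray nch S /\ exists n, S n = x.

Fixpoint lcp (a b : vertex) : vertex :=
  match a, b with
  | x :: a', y :: b' => if x == y then x :: lcp a' b' else [::]
  | _, _ => [::]
  end.

(* x belongs to the vertex set of the geodesic path from a to b in tau *)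
Definition tpath (a b x : vertex) : bool :=
  (prefix x a || prefix x b) && prefix (lcp a b) x.

(* For a non-root u, m ranges over 0..nch u: corner m is
   the corner of u visited just before going to child m (m = 0: just after
   arriving from the parent), the corner nch u being the one before going back
   to the parent.  For the root, m ranges over 0..(nch [::]).-1; (root, 0) is the
   root corner c_0 (between the last and the first child). *)
Definition corner := (vertex * nat)%type.

(* next corner in the (clockwise, leftmost-child-first) contour *)
Definition csucc (nch : vertex -> nat) (c : corner) : corner :=
  let: (u, m) := c in
  if (m < nch u)%N then (rcons u m, 0%N)
  else if u is [::] then c
  else let p := take (size u).-1 u in let j := last 0%N u in
       (p, if (p == [::]) && (j.+1 == nch p) then 0%N else j.+1).

Definition cpred (nch : vertex -> nat) (c : corner) : corner :=
  let: (u, m) := c in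
  if (0 < m)%N then let w := rcons u m.-1 in (w, nch w)
  else if u is [::] then let w := rcons [::] (nch [::]).-1 in (w, nch w)
  else (take (size u).-1 u, last 0%N u).

Definition c0 : corner := ([::], 0%N).

(* the corner c_i, i in Z: c_0, c_1, ... clockwise (left-hand side),
   c_{-1}, c_{-2}, ... counterclockwise (right-hand side) *)
Definition cornerZ (nch : vertex -> nat) (i : int) : corner :=
  match i with
  | Posz n => iter n (csucc nch) c0
  | Negz n => iter n.+1 (cpred nch) c0
  end.

Definition cV (nch : vertex -> nat) (i : int) : vertex := (cornerZ nch i).1.

Definition clab (nch : vertex -> nat) (lab : vertex -> int) (i : int) : int :=
  lab (cV nch i).

(* successor S(c_i) = c_j, j the first index > i with l(c_j) = l(c_i) - 1
   (returns i itself if there is none; this never happens for theta in S) *)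
Definition csuccessor (nch : vertex -> nat) (lab : vertex -> int) (i : int) : int :=
  match excluded_middle_informative
          (exists n : nat, clab nch lab (i + n.+1%:Z) == clab nch lab i - 1) with
  | left H => i + (ex_minn H).+1%:Z
  | right _ => i
  end.

Record quad := Quad {
  qvert : vertex -> Prop;
  qadj  : vertex -> vertex -> Prop;
  qroot : vertex * vertex
}.

Definition Phi (nch : vertex -> nat) (lab : vertex -> int) (eta : bool) : quad :=
  Quad (fun u => vtx nch u)
       (fun u v => exists i : int,
            (cV nch i = u /\ cV nch (csuccessor nch lab i) = v) \/
            (cV nch i = v /\ cV nch (csuccessor nch lab i) = u))
       (let a := cV nch 0 in let b := cV nch (csuccessor nch lab 0) in
        if eta then (b, a) else (a, b)).

Definition proper_geodesic_ray (lab : vertex -> int) (q : quad)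
    (gamma : nat -> vertex) : Prop :=
  gamma 0%N = [::] /\
  (forall i, qvert q (gamma i)) /\
  (forall i, lab (gamma i) = - (i%:Z)) /\
  (forall i, qadj q (gamma i) (gamma i.+1)).

Definition cmax (nch : vertex -> nat) (lab : vertex -> int) (i : nat) : int :=
  iter i (csuccessor nch lab) 0.

Definition gmax (nch : vertex -> nat) (lab : vertex -> int) (i : nat) : vertex :=
  cV nch (cmax nch lab i).

Definition lastc (nch : vertex -> nat) (v : vertex) : nat :=
  match excluded_middle_informative
          (exists n : nat, cV nch n = v /\
             (forall m : nat, cV nch m = v -> (m <= n)%N)) with
  | left H => proj1_sig (constructive_indefinite_description _ H)
  | right _ => 0%N
  end.

Fixpoint gmin (nch : vertex -> nat) (lab : vertex -> int) (n : nat) : vertex :=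
  match n with
  | 0%N => [::]
  | n'.+1 => cV nch (csuccessor nch lab (lastc nch (gmin nch lab n')))
  end.

Definition cmin (nch : vertex -> nat) (lab : vertex -> int) (n : nat) : int :=
  (lastc nch (gmin nch lab n))%:Z.

(* Main.v *)
Require Import Defs.
From mathcomp Require Import all_boot all_order all_algebra.
From mathcomp Require Import zify.
From Stdlib Require Import ClassicalEpsilon Classical.
Set Implicit Arguments. Unset Strict Implicit. Unset Printing Implicit Defensive.
Import Order.TTheory GRing.Theory Num.Theory.

Lemma vtx_nil nch : vtx nch [::].
Proof. by []. Qed.

Lemma take_rcons_le (u : seq nat) j i : (i <= size u)%N -> take i (rcons u j) = take i u.
Proof.
rewrite -cats1 take_cat leq_eqVlt => /orP[/eqP ->|->] //.
by rewrite ltnn subnn take0 cats0 take_size.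
Qed.

Lemma vtx_rcons nch u j : vtx nch (rcons u j) = vtx nch u && (j < nch u)%N.
Proof.
rewrite /vtx size_rcons -addn1 iotaD all_cat /= add0n andbT.
rewrite nth_rcons ltnn eqxx take_rcons_le // take_size.
congr (_ && _).
apply: eq_in_all => i; rewrite mem_iota add0n => /andP[_ hi].
by rewrite nth_rcons hi take_rcons_le // (ltnW hi).
Qed.

Lemma prefix_rcons_inv (a v : seq nat) j :
  prefix a (rcons v j) -> ~~ prefix a v -> a = rcons v j.
Proof.
move=> /prefixP[s E] hn.
case: s E => [|x s] E; first by rewrite E cats0.
move: E; rewrite lastI -rcons_cat => /rcons_inj [Ev _].
by move: hn; rewrite Ev prefix_prefix.
Qed.

Lemma prefix_total (a b c : seq nat) : prefix a c -> prefix b c -> prefix a b || prefix b a.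
Proof.
move=> ha hb.
have ea : a = take (size a) c by apply/esym/eqP; rewrite -prefixE.
have eb : b = take (size b) c by apply/esym/eqP; rewrite -prefixE.
case: (leqP (size a) (size b)) => h.
  have -> : a = take (size a) b by rewrite eb take_takel // -ea.
  by rewrite prefix_take.
have -> : b = take (size b) a by rewrite ea take_takel ?(ltnW h) // -eb.
by rewrite prefix_take orbT.
Qed.

Lemma lcp_prefix (a b : seq nat) : prefix a b -> lcp a b = a.
Proof.
elim: a b => [|x a IH] [|y b] //= /andP[/eqP -> h].
by rewrite eqxx IH.
Qed.

Lemma prefix_antisym (a b : seq nat) : prefix a b -> prefix b a -> a = b.
Proof.
move=> h1 h2; move: (size_prefix h1) (size_prefix h2) => s1 s2.
move: h1; rewrite prefixE => /eqP <-.
by rewrite take_oversize // (@leq_trans (size a)).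
Qed.

Fixpoint lexlt (a b : seq nat) : bool :=
  match a, b with
  | [::], [::] => false
  | [::], _ :: _ => true
  | _ :: _, [::] => false
  | x :: a', y :: b' => (x < y)%N || ((x == y) && lexlt a' b')
  end.

Definition lexle a b := (a == b) || lexlt a b.

Lemma lexlt_irr a : lexlt a a = false.
Proof. by elim: a => //= x a ->; rewrite ltnn eqxx. Qed.

Lemma lexlt_trans a b c : lexlt a b -> lexlt b c -> lexlt a c.
Proof.
elim: a b c => [|x a IH] [|y b] [|z c] //=.
case/orP=> [h1|/andP[/eqP <- h1]]; case/orP=> [h2|/andP[/eqP <- h2]].
- by rewrite (ltn_trans h1 h2).
- by rewrite h1.
- by rewrite h2.
- by rewrite (IH _ _ h1 h2) eqxx orbT.
Qed.

Lemma lexlt_asym a b : lexlt a b -> lexlt b a = false.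
Proof.
move=> h; apply/negbTE/negP => h'.
by move: (lexlt_trans h h'); rewrite lexlt_irr.
Qed.

Lemma lexlt_total a b : a != b -> lexlt a b || lexlt b a.
Proof.
elim: a b => [|x a IH] [|y b] //= hne.
case: (ltngtP x y) => //= hxy; rewrite ?orbT //.
subst; apply: IH.
by apply: contraNneq hne => ->.
Qed.

Lemma lexlt_cat p a b : lexlt (p ++ a) (p ++ b) = lexlt a b.
Proof. by elim: p => //= x p ->; rewrite ltnn eqxx. Qed.

Lemma lexlt_ext a x s : lexlt a (a ++ x :: s).
Proof. by elim: a => //= y a ->; rewrite eqxx orbT. Qed.

Lemma lexlt_le_trans a b c : lexlt a b -> lexle b c -> lexlt a c.
Proof. by move=> h /orP[/eqP <-|h']; [|exact: lexlt_trans h h']. Qed.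

Lemma lexle_lt_trans a b c : lexle a b -> lexlt b c -> lexlt a c.
Proof. by move=> /orP[/eqP ->|h] h' //; exact: lexlt_trans h h'. Qed.

Lemma lexle_between x m1 m2 K :
  lexle (rcons x m1) K -> lexle K (rcons x m2) -> prefix x K && (K != x).
Proof.
elim: x K => [|y x IH] [|z K] //=.
rewrite /lexle /= !eqseq_cons.
case: (ltngtP y z) => hyz //=.
exact: IH.
Qed.

Local Open Scope ring_scope.

Section Tree.
Variable nch : vertex -> nat.
Variable lab : vertex -> int.
Variable S : nat -> vertex.
Hypothesis Hray : is_ray nch S.
Hypothesis Huniq : forall S', is_ray nch S' -> forall n, S' n = S n.
Hypothesis Hlab0 : lab [::] = 0.
Hypothesis Hedge : forall u j, vtx nch u -> (j < nch u)%N -> `|lab (rcons u j) - lab u| <= 1.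
Hypothesis Hinf : forall M : int, exists n, lab (S n) < M.

Definition kk t := last 0%N (S t.+1).

Lemma S0 : S 0 = [::].
Proof. by case: Hray. Qed.

Lemma S_step t : S t.+1 = rcons (S t) (kk t) /\ (kk t < nch (S t))%N.
Proof.
case: Hray => _ /(_ t) [j [hj E]].
by rewrite /kk E last_rcons.
Qed.

Lemma size_S t : size (S t) = t.
Proof. by elim: t => [|t IH]; rewrite ?S0 // (S_step t).1 size_rcons IH. Qed.

Lemma S_prefix s t : (s <= t)%N -> prefix (S s) (S t).
Proof.
elim: t => [|t IH]; first by rewrite leqn0 => /eqP ->; exact: prefix_refl.
rewrite leq_eqVlt => /orP[/eqP ->|h]; first exact: prefix_refl.
rewrite (S_step t).1; apply: prefix_trans (IH h) _; exact: prefix_rcons.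
Qed.

Lemma prefix_S u t : prefix u (S t) -> u = S (size u).
Proof.
move=> h; have hs := size_prefix h; rewrite size_S in hs.
have h2 := S_prefix hs.
move: h; rewrite prefixE => /eqP E.
move: h2; rewrite prefixE size_S => /eqP E2.
by rewrite -{1}E E2.
Qed.

Lemma S_inj s t : S s = S t -> s = t.
Proof. by move=> E; rewrite -(size_S s) -(size_S t) E. Qed.

Lemma vtx_S t : vtx nch (S t).
Proof.
elim: t => [|t IH]; first by rewrite S0.
by rewrite (S_step t).1 vtx_rcons IH (S_step t).2.
Qed.

Lemma nch_root : (0 < nch [::])%N.
Proof. by have := (S_step 0).2; rewrite S0; case: (nch [::]). Qed.

Lemma on_spineE x : on_spine nch x <-> exists t, S t = x.
Proof.
split.
- by case=> S' [hr [n <-]]; exists n; rewrite (Huniq hr).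
- by case=> t <-; exists S; split => //; exists t.
Qed.

Definition valid (c : corner) :=
  [&& vtx nch c.1, (c.2 <= nch c.1)%N & (c.1 == [::]) ==> (c.2 < nch c.1)%N].

Lemma take_rcons_belast (u : seq nat) j : take (size (rcons u j)).-1 (rcons u j) = u.
Proof. by rewrite size_rcons /= take_rcons_le // take_size. Qed.

Lemma csucc_rcons (p : seq nat) j :
  csucc nch (rcons p j, nch (rcons p j)) =
  (p, if (p == [::]) && (j.+1 == nch p) then 0%N else j.+1).
Proof.
rewrite /csucc ltnn take_rcons_belast last_rcons.
by case E: (rcons p j) => //; move: E; case: p.
Qed.

Lemma cpred_rcons (p : seq nat) j :
  cpred nch (rcons p j, 0%N) = (p, j).
Proof.
rewrite /cpred /= take_rcons_belast last_rcons.
by case E: (rcons p j) => //; move: E; case: p.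
Qed.

Lemma valid_csucc c : valid c -> valid (csucc nch c).
Proof.
case: c => u m /and3P[hv hm hr]; rewrite /= in hv hm hr.
case: (ltnP m (nch u)) => hmu.
  by rewrite /csucc /= hmu /valid /= vtx_rcons hv hmu; case: (u).
have Em : m = nch u by apply/eqP; rewrite eqn_leq hm hmu.
case/lastP: u hv hm hr hmu Em => [|p j] hv hm hr hmu Em.
  by move: hr; rewrite eqxx /= ltnNge hmu.
rewrite Em csucc_rcons /valid /=; move: hv; rewrite vtx_rcons => /andP[hp hj].
rewrite hp /=.
case: ifP => [/andP[/eqP -> _]|hn]; first by rewrite eqxx /= nch_root.
rewrite hj /=; apply/implyP => /eqP Ep; move: hn; rewrite Ep eqxx /= => /negbT hn.
by rewrite ltn_neqAle hn -Ep hj.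
Qed.

Lemma valid_cpred c : valid c -> valid (cpred nch c).
Proof.
case: c => u m /and3P[hv hm hr]; rewrite /= in hv hm hr.
case: m hm hr => [|m] hm hr.
  case/lastP: u hv hm hr => [|p j] hv hm hr.
    by rewrite /cpred /valid /= /vtx /= andbT leqnn andbT andbT prednK ?nch_root.
  rewrite cpred_rcons /valid /=; move: hv; rewrite vtx_rcons => /andP[-> hj] /=.
  by rewrite (ltnW hj) hj implybT.
rewrite /cpred /valid /= -/(rcons u m) vtx_rcons hv hm leqnn /=.
by case: (u).
Qed.

Lemma valid_c0 : valid c0.
Proof. by rewrite /valid /= nch_root. Qed.

Lemma CZ_nat (n : nat) : cornerZ nch n = iter n (csucc nch) c0.
Proof. by []. Qed.

Lemma CZ_succ_nat (n : nat) : cornerZ nch (n.+1)%:Z = csucc nch (cornerZ nch n).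
Proof. by []. Qed.

Lemma CZ_pred_neg (n : nat) : cornerZ nch (- (n.+1)%:Z) = cpred nch (cornerZ nch (- n%:Z)).
Proof. by case: n. Qed.

Lemma valid_CZ (k : int) : valid (cornerZ nch k).
Proof.
case: k => n.
  by elim: n => [|n IH]; [exact: valid_c0|rewrite CZ_succ_nat; exact: valid_csucc].
elim: n => [|n IH]; first by apply: valid_cpred; exact: valid_c0.
have -> : Negz n.+1 = - (n.+2)%:Z by [].
rewrite CZ_pred_neg; apply: valid_cpred; exact: IH.
Qed.


Definition adj (a b : vertex) := exists j,
  (b = rcons a j /\ vtx nch a /\ (j < nch a)%N) \/ (a = rcons b j /\ vtx nch b /\ (j < nch b)%N).

Lemma adj_sym a b : adj a b -> adj b a.
Proof. by case=> j [h|h]; exists j; [right|left]. Qed.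

Lemma adj_csucc c : valid c -> adj c.1 (csucc nch c).1.
Proof.
case: c => u m /and3P[hv hm hr]; rewrite /= in hv hm hr.
case: (ltnP m (nch u)) => hmu.
  by exists m; left; rewrite /csucc /= hmu.
have Em : m = nch u by apply/eqP; rewrite eqn_leq hm hmu.
case/lastP: u hv hm hr hmu Em => [|p j] hv hm hr hmu Em.
  by move: hr; rewrite eqxx /= ltnNge hmu.
rewrite Em csucc_rcons /=; move: hv; rewrite vtx_rcons => /andP[hp hj].
by exists j; right.
Qed.

Lemma adj_cpred c : valid c -> adj c.1 (cpred nch c).1.
Proof.
case: c => u m /and3P[hv hm hr]; rewrite /= in hv hm hr.
case: m hm hr => [|m] hm hr.
  case/lastP: u hv hm hr => [|p j] hv hm hr.
    exists (nch [::]).-1; left; rewrite /cpred /=; split => //; split => //.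
    by rewrite prednK ?nch_root.
  rewrite cpred_rcons /=; move: hv; rewrite vtx_rcons => /andP[hp hj].
  by exists j; right.
by exists m; left; rewrite /cpred /=.
Qed.

Lemma adj_CZ (k : int) : adj (cV nch k) (cV nch (k + 1)).
Proof.
case: k => n.
  have -> : (Posz n + 1) = (n.+1)%:Z by lia.
  rewrite /cV CZ_succ_nat; apply: adj_csucc; exact: valid_CZ.
have -> : Negz n + 1 = - n%:Z by rewrite NegzE; lia.
have -> : Negz n = - (n.+1)%:Z by [].
rewrite /cV CZ_pred_neg; apply: adj_sym; apply: adj_cpred; exact: valid_CZ.
Qed.

Lemma lab_adj a b : adj a b -> `|lab b - lab a| <= 1.
Proof.
case=> j [[-> [hv hj]]|[-> [hv hj]]]; first exact: Hedge.
have := Hedge hv hj; lia.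
Qed.

Lemma clab_step (k : int) : `|clab nch lab (k + 1) - clab nch lab k| <= 1.
Proof. exact: lab_adj (adj_CZ k). Qed.

Lemma adj_size a b : adj a b -> (size b <= (size a).+1)%N.
Proof. by case=> j [[-> _]|[-> _]]; rewrite size_rcons // ltnW. Qed.

Lemma depth_nat (n : nat) : (size (cV nch n) <= n)%N.
Proof.
elim: n => [|n IH] //.
have := adj_size (adj_CZ n); have -> : (n%:Z + 1) = Posz n.+1 by lia.
move=> h.
exact: leq_trans h _.
Qed.

Lemma enter_step a v w : adj v w -> ~~ prefix a v -> prefix a w -> w = a.
Proof.
case=> j [[-> _]|[-> _]] hn hp.
  by rewrite (prefix_rcons_inv hp hn).
by move: hn; rewrite (prefix_trans hp (prefix_rcons w j)).
Qed.

Lemma exit_step a v w : adj v w -> prefix a v -> ~~ prefix a w -> v = a.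
Proof.
case=> j [[-> _]|[-> _]] hp hn.
  by move: hn; rewrite (prefix_trans hp (prefix_rcons v j)).
by rewrite (prefix_rcons_inv hp hn).
Qed.

Lemma enter (a : vertex) (k : int) (d : nat) :
  ~~ prefix a (cV nch k) -> prefix a (cV nch (k + d%:Z)) ->
  exists n : int, k < n <= k + d%:Z /\ cV nch n = a.
Proof.
move=> hn; elim: d => [|d IH].
  by rewrite addr0 (negbTE hn).
have -> : k + (d.+1)%:Z = (k + d%:Z) + 1 by lia.
case E: (prefix a (cV nch (k + d%:Z))).
  move=> _; case: (IH E) => n [hn1 hn2]; exists n; split => //; lia.
move=> h; exists (k + d%:Z + 1); split; first lia.
exact: enter_step (adj_CZ _) (negbT E) h.
Qed.


Definition term (w : vertex) := exists N, iter N (csucc nch) (w, 0%N) = (w, nch w).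

Lemma term_children w : w != [::] ->
  (forall j, (j < nch w)%N -> term (rcons w j)) -> term w.
Proof.
move=> hw hc.
suff : forall m, (m <= nch w)%N -> exists N, iter N (csucc nch) (w, 0%N) = (w, m).
  by move/(_ (nch w) (leqnn _)).
elim=> [|m IH] hm; first by exists 0%N.
case: (IH (ltnW hm)) => N HN.
case: (hc m hm) => N' HN'.
exists (N'.+1 + N.+1)%N.
have E1 : csucc nch (w, m) = (rcons w m, 0%N) by rewrite /csucc /= hm.
by rewrite iterD (iterS N) HN E1 iterS HN' csucc_rcons (negbTE hw).
Qed.

Lemma nonterm_child w : w != [::] -> ~ term w ->
  exists j, (j < nch w)%N /\ ~ term (rcons w j).
Proof.
move=> hw ht; apply: NNPP => hn; apply: ht; apply: term_children => // j hj.
apply: NNPP => hnt; apply: hn; by exists j.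
Qed.

Definition pickc (w : vertex) : vertex :=
  match excluded_middle_informative (exists j, (j < nch w)%N /\ ~ term (rcons w j)) with
  | left H => rcons w (proj1_sig (constructive_indefinite_description _ H))
  | right _ => w
  end.

Lemma pickc_spec w : w != [::] -> ~ term w ->
  exists j, pickc w = rcons w j /\ (j < nch w)%N /\ ~ term (pickc w).
Proof.
move=> hw ht; rewrite /pickc.
case: excluded_middle_informative => [H|H]; last by exfalso; apply: H; exact: nonterm_child.
case: (constructive_indefinite_description _ H) => j [hj hnt] /=.
by exists j.
Qed.

Lemma left_term t m : (m < kk t)%N -> term (rcons (S t) m).
Proof.
move=> hm; apply: NNPP => hnt.
pose w0 := rcons (S t) m.
have inv : forall s, iter s pickc w0 != [::] /\ ~ term (iter s pickc w0).
  elim=> [|s [IH1 IH2]]; first by split => //; rewrite /w0; case: (S t).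
  case: (pickc_spec IH1 IH2) => j [E [_ h3]].
  by rewrite iterS E; split => //; [case: (iter s pickc w0)|rewrite -E].
pose r n := if (n <= t)%N then S n else iter (n - t.+1) pickc w0.
have hr : is_ray nch r.
  split; first by rewrite /r leq0n S0.
  move=> n; rewrite /r.
  case: (ltngtP n t) => h.
  - exact: Hray.2.
  - have -> : (n.+1 - t.+1 = (n - t.+1).+1)%N by lia.
    have [h1 h2] := inv (n - t.+1)%N.
    case: (pickc_spec h1 h2) => j [E [hj _]]; exists j; split => //; by rewrite iterS.
  - subst n; rewrite subnn /=; exists m; split => //.
    exact: ltn_trans hm (S_step t).2.
have := Huniq hr t.+1; rewrite /r ltnn subnn /= (S_step t).1 => /rcons_inj /(congr1 snd) /= E.
by rewrite E ltnn in hm.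
Qed.

Lemma CZ_add (p a : nat) : cornerZ nch (a + p)%N = iter a (csucc nch) (cornerZ nch p).
Proof. by rewrite /= iterD. Qed.

Lemma visit_m t m : (m <= kk t)%N -> exists p : nat, cornerZ nch p = (S t, m).
Proof.
elim: t m => [|t IH] m.
  elim: m => [|m IHm] hm; first by exists 0%N; rewrite S0.
  case: (IHm (ltnW hm)) => p Hp.
  have hmt : (m < nch (S 0))%N := ltn_trans hm (S_step 0).2.
  case: (left_term hm) => N HN.
    have E1 : csucc nch (S 0, m) = (rcons (S 0) m, 0%N) by rewrite /csucc /= hmt.
  exists (N.+1 + p.+1)%N; rewrite CZ_add CZ_succ_nat Hp E1 iterS HN csucc_rcons.
  case: ifP => // /andP[_ /eqP E]; move: (S_step 0).2; by rewrite -E ltnNge hm.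
have [p0 Hp0] : exists p : nat, cornerZ nch p = (S t.+1, 0%N).
  case: (IH (kk t) (leqnn _)) => p Hp; exists p.+1.
  rewrite CZ_succ_nat Hp /csucc /= (S_step t).2 -(S_step t).1 //.
elim: m => [|m IHm] hm; first by exists p0.
case: (IHm (ltnW hm)) => p Hp.
have hmt : (m < nch (S t.+1))%N := ltn_trans hm (S_step t.+1).2.
case: (left_term hm) => N HN.
have E1 : csucc nch (S t.+1, m) = (rcons (S t.+1) m, 0%N) by rewrite /csucc /= hmt.
exists (N.+1 + p.+1)%N; rewrite CZ_add CZ_succ_nat Hp E1 iterS HN csucc_rcons.
case: ifP => // /andP[_ /eqP E]; move: (S_step t.+1).2; by rewrite -E ltnNge hm.
Qed.

Lemma visit t : exists p : nat, cornerZ nch p = (S t, 0%N).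
Proof. exact: visit_m. Qed.


Notation L := (clab nch lab).
Notation V := (cV nch).

Lemma lab_S_ge t : - t%:Z <= lab (S t).
Proof.
elim: t => [|t IH]; first by rewrite S0 Hlab0.
have := Hedge (vtx_S t) (S_step t).2; rewrite -(S_step t).1; lia.
Qed.

Lemma low_left (k M : int) : exists n : nat, k < n%:Z /\ L n < M.
Proof.
case: (Hinf (- (`|M| + `|k| + 1))) => t ht.
have := lab_S_ge t => hge.
case: (visit t) => p hp.
have hd := depth_nat p; rewrite /cV hp /= size_S in hd.
exists p; split; first lia.
rewrite /clab /cV hp /=; lia.
Qed.

Lemma ivt (j : int) (d : nat) (v : int) :
  v <= L j -> L (j + d%:Z) <= v -> exists e : nat, (e <= d)%N /\ L (j + e%:Z) = v.
Proof.
move=> h0; elim: d => [|d IH].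
  rewrite addr0 => h; exists 0%N; split => //; rewrite addr0; lia.
have -> : j + (d.+1)%:Z = (j + d%:Z) + 1 by lia.
move=> h1; case: (lerP (L (j + d%:Z)) v) => h2.
  by case: (IH h2) => e [he1 he2]; exists e; split => //; exact: leqW.
exists d.+1; split => //.
have := clab_step (j + d%:Z); have -> : j + (d.+1)%:Z = (j + d%:Z) + 1 by lia.
lia.
Qed.

Lemma succ_ex (k : int) : exists n : nat, L (k + (n.+1)%:Z) == L k - 1.
Proof.
case: (low_left k (L k - 1)) => p [hp1 hp2].
have hst := clab_step k.
have h0 : L k - 1 <= L (k + 1) by lia.
have [d Hd] : exists d : nat, p%:Z = k + 1 + d%:Z by exists (absz (p%:Z - (k + 1))%R); lia.
case: (@ivt (k + 1) d (L k - 1) h0); first by rewrite -Hd; lia.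
move=> e [_ he]; exists e; apply/eqP; rewrite -he; congr (L _); lia.
Qed.

Notation Sc := (csuccessor nch lab).

Lemma succ_spec (k : int) : exists n : nat,
  Sc k = k + (n.+1)%:Z /\ L (k + (n.+1)%:Z) = L k - 1 /\
  (forall m : nat, L (k + (m.+1)%:Z) == L k - 1 -> (n <= m)%N).
Proof.
rewrite /csuccessor.
case: excluded_middle_informative => [H|H]; last by exfalso; apply: H; exact: succ_ex.
case: ex_minnP => n hn hmin; exists n; split => //; split => //; exact/eqP.
Qed.

Lemma succ_gt k : k < Sc k.
Proof. by case: (succ_spec k) => n [-> _]; lia. Qed.

Lemma succ_lab k : L (Sc k) = L k - 1.
Proof. by case: (succ_spec k) => n [-> [h _]]. Qed.

Lemma succ_min k j : k < j -> L j = L k - 1 -> Sc k <= j.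
Proof.
case: (succ_spec k) => n [-> [_ hmin]] hkj hj.
have [m Hm] : exists m : nat, j = k + (m.+1)%:Z by exists (absz (j - k - 1)%R); lia.
have := hmin m; rewrite -Hm hj eqxx => /(_ isT) h; lia.
Qed.

Lemma succ_between k j : k < j -> j < Sc k -> L k <= L j.
Proof.
move=> h1 h2; case: (lerP (L k) (L j)) => // h3.
have hst := clab_step k.
have h0 : L k - 1 <= L (k + 1) by lia.
have [d Hd] : exists d : nat, j = k + 1 + d%:Z by exists (absz (j - (k + 1))%R); lia.
case: (@ivt (k + 1) d (L k - 1) h0); first by rewrite -Hd; lia.
move=> e [he1 he2].
have hlt : k < k + 1 + e%:Z by lia.
have := succ_min hlt he2 => h; lia.
Qed.

Lemma succ_mono a b : a <= b -> L a = L b -> Sc a <= Sc b.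
Proof.
move=> hab hl; case: (lerP (Sc a) b) => h.
  have := succ_gt b; lia.
have hb : a < b \/ a = b by lia.
case: hb => [hb|->]; last lia.
apply: succ_min; first by have := succ_gt b; lia.
by rewrite succ_lab hl.
Qed.


Definition key (c : corner) : seq nat := rcons c.1 c.2.

Lemma lexlt_cons_lt (p a b : seq nat) x y : (x < y)%N -> lexlt (p ++ x :: a) (p ++ y :: b).
Proof. by move=> h; rewrite lexlt_cat /= h. Qed.

Lemma lexlt_single (p b : seq nat) x : b != [::] -> lexlt (p ++ [:: x]) (p ++ x :: b).
Proof. by rewrite lexlt_cat /= ltnn eqxx /=; case: b. Qed.

Lemma rcons2 (p : seq nat) x y : rcons (rcons p x) y = p ++ [:: x; y].
Proof. by rewrite -!cats1 -catA. Qed.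

Lemma S_ext s t : (s < t)%N -> exists r, S t = S s ++ kk s :: r.
Proof.
move=> h; have := S_prefix h; rewrite (S_step s).1 => /prefixP [r ->].
by exists r; rewrite cat_rcons.
Qed.

Lemma spine_not_branch t s j w : S s ++ j :: w = S t -> j = kk s.
Proof.
move=> E; have hs : (s < t)%N.
  by have := congr1 size E; rewrite size_cat /= !size_S => <-; rewrite addnS ltnS leq_addr.
case: (S_ext hs) => r Er; move: E; rewrite Er => /eqP; rewrite eqseq_cat //.
by case/andP => _ /eqP [].
Qed.

Definition lgood (c : corner) :=
  (exists t, c.1 = S t /\ (c.2 <= kk t)%N) \/
  (exists t j w, c.1 = S t ++ j :: w /\ (j < kk t)%N).

Definition rgood (c : corner) :=
  (exists t, c.1 = S t /\ (kk t < c.2)%N) \/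
  (exists t j w, c.1 = S t ++ j :: w /\ (kk t < j)%N).

Lemma lgood_csucc c : valid c -> lgood c ->
  lgood (csucc nch c) /\ lexlt (key c) (key (csucc nch c)).
Proof.
case: c => u m hv [[t [Eu hm]]|[t [j [w [Eu hj]]]]];
  rewrite /= in Eu; subst u; try rewrite /= in hm.
- have hmn : (m < nch (S t))%N := leq_ltn_trans hm (S_step t).2.
  have -> : csucc nch (S t, m) = (rcons (S t) m, 0%N) by rewrite /csucc /= hmn.
  split; last by rewrite /key /= -(cats1 (rcons _ _)) lexlt_ext.
  move: hm; rewrite leq_eqVlt => /orP[/eqP ->|hm].
    by left; exists t.+1; rewrite /= -(S_step t).1.
  by right; exists t, m, [::]; rewrite /= cats1.
- case: (ltnP m (nch (S t ++ j :: w))) => hmn.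
    have -> : csucc nch (S t ++ j :: w, m) = (rcons (S t ++ j :: w) m, 0%N) by rewrite /csucc /= hmn.
    split; last by rewrite /key /= -(cats1 (rcons _ _)) lexlt_ext.
    by right; exists t, j, (rcons w m); rewrite /= rcons_cat rcons_cons.
  move: hv => /and3P [_ hm _]; rewrite /= in hm.
  have Em : m = nch (S t ++ j :: w) by apply/eqP; rewrite eqn_leq hm hmn.
  have hjn : (j.+1 < nch (S t))%N := leq_ltn_trans hj (S_step t).2.
  case/lastP: w hmn hm Em => [|w x] hmn hm Em.
    rewrite Em cats1 csucc_rcons (ltn_eqF hjn) andbF.
    split; first by left; exists t.
    by rewrite /key /= rcons2 -(cats1 (S t) j.+1) lexlt_cons_lt.
  rewrite Em -rcons_cons -rcons_cat csucc_rcons.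
  have -> : (S t ++ j :: w == [::]) = false by case: (S t).
  split; first by right; exists t, j, w.
  by rewrite /key /= rcons2 -(cats1 _ x.+1) lexlt_cons_lt.
Qed.

Lemma rgood_cpred c : valid c -> rgood c ->
  rgood (cpred nch c) /\ lexlt (key (cpred nch c)) (key c).
Proof.
case: c => u m hv [[t [Eu hm]]|[t [j [w [Eu hj]]]]];
  rewrite /= in Eu; subst u; try rewrite /= in hm.
- case: m hm hv => [|m] hm hv //.
  have -> : cpred nch (S t, m.+1) = (rcons (S t) m, nch (rcons (S t) m)) by [].
  split; last by rewrite /key /= rcons2 -(cats1 _ m.+1) lexlt_cons_lt.
  move: hm; rewrite ltnS leq_eqVlt => /orP[/eqP <-|hm].
    by left; exists t.+1; rewrite /= -(S_step t).1; split => //; exact: (S_step t.+1).2.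
  by right; exists t, m, [::]; rewrite /= cats1.
- case: m hv => [|m] hv.
    case/lastP: w hv => [|w x] hv.
      rewrite cats1 cpred_rcons; split; first by left; exists t.
      by rewrite /key /= -(cats1 (rcons _ _)) lexlt_ext.
    rewrite -rcons_cons -rcons_cat cpred_rcons.
    split; first by right; exists t, j, w.
    by rewrite /key /= -(cats1 (rcons _ _)) lexlt_ext.
  have -> : cpred nch (S t ++ j :: w, m.+1) =
    (rcons (S t ++ j :: w) m, nch (rcons (S t ++ j :: w) m)) by [].
  split; last by rewrite /key /= rcons2 -(cats1 _ m.+1) lexlt_cons_lt.
  by right; exists t, j, (rcons w m); rewrite /= rcons_cat rcons_cons.
Qed.

Lemma left_inv (n : nat) : lgood (cornerZ nch n).
Proof.
elim: n => [|n IH]; first by left; exists 0%N; rewrite /= S0.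
rewrite CZ_succ_nat; exact: (lgood_csucc (valid_CZ _) IH).1.
Qed.

Lemma key_mono (a b : nat) : (a < b)%N -> lexlt (key (cornerZ nch a)) (key (cornerZ nch b)).
Proof.
elim: b => [|b IH] // hab.
have h1 := (lgood_csucc (valid_CZ b) (left_inv b)).2.
rewrite CZ_succ_nat.
move: hab; rewrite ltnS leq_eqVlt => /orP[/eqP ->|h] //.
exact: lexlt_trans (IH h) h1.
Qed.

Lemma right_inv (n : nat) : rgood (cornerZ nch (- (n.+1)%:Z)).
Proof.
elim: n => [|n IH].
  have -> : cornerZ nch (- 1%:Z) = ([:: (nch [::]).-1], nch [:: (nch [::]).-1]) by [].
  have h0 := (S_step 0).2; rewrite S0 in h0.
  have : (kk 0 <= (nch [::]).-1)%N by rewrite -ltnS prednK ?nch_root.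
  rewrite leq_eqVlt => /orP[/eqP E|h].
    left; exists 1%N; rewrite /= (S_step 0).1 S0 E; split => //.
    have := (S_step 1).2; rewrite (S_step 0).1 S0 /=.
    by rewrite E.
  by right; exists 0%N, (nch [::]).-1, [::]; rewrite S0.
rewrite CZ_pred_neg; exact: (rgood_cpred (valid_CZ _) IH).1.
Qed.

Lemma key_mono_neg (a b : nat) : (a < b)%N ->
  lexlt (key (cornerZ nch (- (b.+1)%:Z))) (key (cornerZ nch (- (a.+1)%:Z))).
Proof.
elim: b => [|b IH] // hab.
have h1 := (rgood_cpred (valid_CZ _) (right_inv b)).2.
rewrite CZ_pred_neg.
move: hab; rewrite ltnS leq_eqVlt => /orP[/eqP ->|h] //.
exact: lexlt_trans h1 (IH h).
Qed.


Lemma catl_inj (p a b : seq nat) : p ++ a = p ++ b -> a = b.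
Proof. by move/eqP; rewrite eqseq_cat // eqxx => /eqP. Qed.

Lemma branch_lt t t' j j' w w' :
  S t ++ j :: w = S t' ++ j' :: w' -> (t < t')%N -> j = kk t.
Proof.
move=> E h; case: (S_ext h) => r Er; move: E; rewrite Er -catA /= => /catl_inj.
by case.
Qed.

Lemma key_rcons_lt (x : seq nat) a b : lexlt (rcons x a) (rcons x b) = (a < b)%N.
Proof. by rewrite -!cats1 lexlt_cat /= andbF orbF. Qed.

Lemma keyC (n : int) : key (cornerZ nch n) = rcons (V n) (cornerZ nch n).2.
Proof. by []. Qed.

Lemma key_lt_index (a b : nat) :
  lexlt (key (cornerZ nch a)) (key (cornerZ nch b)) -> (a < b)%N.
Proof.
move=> h; case: (ltngtP a b) => // hba.
  by move: (lexlt_asym h); rewrite (key_mono hba).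
by move: h; rewrite hba lexlt_irr.
Qed.

Lemma left_between (a n b : nat) : (a <= n)%N -> (n <= b)%N -> V a = V b ->
  prefix (V a) (V n).
Proof.
move=> h1 h2 E.
have l1 : lexle (key (cornerZ nch a)) (key (cornerZ nch n)).
  move: h1; rewrite leq_eqVlt => /orP[/eqP ->|h]; first by rewrite /lexle eqxx.
  by rewrite /lexle key_mono // orbT.
have l2 : lexle (key (cornerZ nch n)) (key (cornerZ nch b)).
  move: h2; rewrite leq_eqVlt => /orP[/eqP ->|h]; first by rewrite /lexle eqxx.
  by rewrite /lexle key_mono // orbT.
rewrite !keyC in l1; rewrite !keyC -E in l2.
have /andP[hp hne] := lexle_between l1 l2.
apply/negPn/negP => hn.
by move: hne; rewrite -(prefix_rcons_inv hp hn) eqxx.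
Qed.

Lemma lastc_ex x (n0 : nat) : V n0 = x ->
  exists n : nat, V n = x /\ (forall m : nat, V m = x -> (m <= n)%N).
Proof.
move=> h0; apply: NNPP => H.
suff : forall t, exists n : nat, V n = x /\ (t <= (cornerZ nch n).2)%N.
  case/(_ (nch x).+1) => n [hn ht].
  move: (valid_CZ n) => /and3P [_ hm _].
  by move: ht; rewrite ltnNge -hn hm.
elim=> [|t [n [hn ht]]]; first by exists n0.
have : ~ (forall m : nat, V m = x -> (m <= n)%N) by move=> hh; apply: H; exists n.
move=> /not_all_ex_not [m hm].
have hmx : V m = x by apply: NNPP => hh; apply: hm => /hh.
have hnm : (n < m)%N by rewrite ltnNge; apply/negP => hh; apply: hm => _.
exists m; split => //.
have := key_mono hnm; rewrite !keyC hn hmx key_rcons_lt.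
exact: leq_ltn_trans ht.
Qed.

Lemma lastc_spec x (n0 : nat) : V n0 = x ->
  V (lastc nch x) = x /\ (forall m : nat, V m = x -> (m <= lastc nch x)%N).
Proof.
move=> h0; rewrite /lastc.
case: excluded_middle_informative => [H|H]; last by exfalso; apply: H; exact: lastc_ex h0.
by case: (constructive_indefinite_description _ H).
Qed.

Lemma lgood_spine c s : lgood c -> c.1 = S s -> (c.2 <= kk s)%N.
Proof.
case=> [[t [E h]]|[t [j [w [E h]]]]] Es.
  by move: Es; rewrite E => /S_inj <-.
exfalso; move: Es; rewrite E => Es.
have := spine_not_branch Es => hj; move: h; by rewrite hj ltnn.
Qed.

Lemma spine_before_desc (a n : nat) s :
  V a = S s -> prefix (S s.+1) (V n) -> (a < n)%N.
Proof.
move=> ha hn; apply: key_lt_index.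
have hm := lgood_spine (left_inv a) ha.
move: hn; rewrite (S_step s).1 => /prefixP [r Er].
rewrite !keyC ha Er cat_rcons rcons_cat rcons_cons -(cats1 (S s)).
move: hm; rewrite leq_eqVlt => /orP[/eqP ->|hm].
  by rewrite lexlt_single //; case: (r).
by apply: lexlt_cons_lt.
Qed.

Lemma after_last_spine s (n : nat) :
  (lastc nch (S s) < n)%N -> prefix (S s.+1) (V n).
Proof.
move=> hn.
case: (visit_m (leqnn (kk s))) => p hp.
have hVp : V p = S s by rewrite /cV hp.
have [_ hmax] := lastc_spec hVp.
have hpn : (p < n)%N := leq_ltn_trans (hmax _ hVp) hn.
have hk := key_mono hpn; rewrite hp keyC in hk.
case: (left_inv n) => [[t [E h]]|[t [j [w [E h]]]]]; rewrite /cV E.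
- case: (ltngtP s t) => hst.
  + exact: S_prefix.
  + case: (S_ext hst) => r Er.
    move: hk; rewrite /cV E Er /key /= -!cats1 -catA.
    move: h; rewrite leq_eqVlt => /orP[/eqP ->|h].
      rewrite /= lexlt_asym //; apply: lexlt_single; by case: (r).
    rewrite /= lexlt_asym //; rewrite -?catA /=; exact: lexlt_cons_lt.
  + move: hk; rewrite /cV E hst /key /= key_rcons_lt ltnNge.
    by rewrite (leq_trans h).
- case: (ltngtP s t) => hst.
  + exact: prefix_trans (S_prefix hst) (prefix_prefix _ _).
  + case: (S_ext hst) => r Er.
    move: hk; rewrite /cV E Er /key /= -!cats1 -catA /=.
    rewrite /= lexlt_asym //; rewrite -?catA /=; exact: lexlt_cons_lt.
  + move: hk; rewrite /cV E hst /key /= -cats1 rcons_cat rcons_cons.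
    rewrite /= lexlt_asym //; rewrite -?catA /=; exact: lexlt_cons_lt.
Qed.

Lemma off_spine_after z (n0 n : nat) : ~ (exists t, S t = z) -> V n0 = z ->
  (lastc nch z < n)%N -> ~~ prefix z (V n).
Proof.
move=> hz h0 hn; apply/negP => hp.
have [_ hmax] := lastc_spec h0.
have stay : forall d : nat, prefix z (V (n + d)%N).
  elim=> [|d IH]; first by rewrite addn0.
  apply/negPn/negP => hn'.
  have := exit_step (adj_CZ (n + d)%N) IH.
  have -> : ((n + d)%N%:Z + 1) = (n + d.+1)%N by lia.
  move=> /(_ hn') hz'.
  have := hmax _ hz'; rewrite leqNgt => /negP; apply.
  exact: leq_trans hn (leq_addr _ _).
pose T := (n + size z).+1.
case: (visit T) => p hpT.
have hd := depth_nat p; rewrite /cV hpT /= size_S in hd.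
have := stay (p - n)%N; rewrite subnKC; last by apply: leq_trans hd; rewrite /T leqW // leq_addr.
rewrite /cV hpT /= => /prefix_S E.
by apply: hz; exists (size z).
Qed.

Lemma right_spine_below (b : int) t : b < 0 -> V b = S t ->
  forall a, a <= b -> prefix (S t) (V a).
Proof.
move=> hb hVb a hab.
have [nb Enb] : exists nb : nat, b = - (nb.+1)%:Z by exists (absz (- b - 1)%R); lia.
have [na Ena] : exists na : nat, a = - (na.+1)%:Z by exists (absz (- a - 1)%R); lia.
have : (nb <= na)%N by lia.
rewrite leq_eqVlt => /orP[/eqP E|hlt].
  have -> : a = b by rewrite Ena Enb E.
  by rewrite hVb prefix_refl.
have hk := key_mono_neg hlt; rewrite -Ena -Enb !keyC in hk.
have hm : (kk t < (cornerZ nch b).2)%N.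
  case: (right_inv nb) => [[t' [E h]]|[t' [j [w [E h]]]]]; rewrite -Enb in E h.
    by move: hVb; rewrite /cV E => /S_inj <-.
  exfalso; move: hVb; rewrite /cV E => Es.
  by have := spine_not_branch Es => hj; move: h; rewrite hj ltnn.
rewrite hVb in hk.
case: (right_inv na) => [[s [E h]]|[s [j [w [E h]]]]]; rewrite -Ena in E h;
  rewrite /cV E; rewrite /cV E in hk.
- case: (leqP t s) => hts; first exact: S_prefix.
  case: (S_ext hts) => r Er.
  move: hk; rewrite Er -!cats1 -catA /=.
  rewrite /= lexlt_asym //; rewrite -?catA /=; exact: lexlt_cons_lt.
- case: (leqP t s) => hts; first exact: prefix_trans (S_prefix hts) (prefix_prefix _ _).
  case: (S_ext hts) => r Er.
  move: hk; rewrite Er -cats1 rcons_cat rcons_cons -catA /=.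
  rewrite /= lexlt_asym //; rewrite -?catA /=; exact: lexlt_cons_lt.
Qed.

Lemma left_right_spine (c : nat) (b : int) x : b < 0 -> V c = x -> V b = x ->
  exists t, x = S t.
Proof.
move=> hb hc hbx.
have [nb Enb] : exists nb : nat, b = - (nb.+1)%:Z by exists (absz (- b - 1)%R); lia.
case: (left_inv c) => [[t [E _]]|[t [j [w [E hj]]]]].
  by exists t; rewrite -hc /cV E.
case: (right_inv nb) => [[t' [E' _]]|[t' [j' [w' [E' hj']]]]]; rewrite -Enb in E'.
  by exists t'; rewrite -hbx /cV E'.
exfalso.
have EE : S t ++ j :: w = S t' ++ j' :: w' by rewrite -E -E' -/(V c) -/(V b) hc hbx.
case: (ltngtP t t') => h.
- by move: hj; rewrite (branch_lt EE h) ltnn.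
- by move: hj'; rewrite (branch_lt (esym EE) h) ltnn.
- subst t'; move: EE => /catl_inj [Ej _]; move: hj hj'; rewrite Ej => h1 h2.
  by move: (ltn_trans h1 h2); rewrite ltnn.
Qed.


Definition anc_ok (x : vertex) := forall a, prefix a x -> a != x -> lab x < lab a.

Lemma anc_ok_nil : anc_ok [::].
Proof. by move=> a; rewrite prefixs0 => /eqP ->; rewrite eqxx. Qed.

Lemma nat_of_nonneg (k : int) : 0 <= k -> k = (absz k)%:Z.
Proof. lia. Qed.

Lemma anc_ok_succ (e : int) : anc_ok (V e) -> anc_ok (V (Sc e)).
Proof.
move=> he a ha hne.
have hl := succ_lab e.
have hL : lab (V (Sc e)) = L (Sc e) by [].
case E: (prefix a (V e)).
  case: (eqVneq a (V e)) => [->|hne'].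
    rewrite hL hl /clab; lia.
  have := he a E hne'; rewrite hL hl /clab; lia.
have hgt := succ_gt e.
have [d Hd] : exists d : nat, Sc e = e + d%:Z by exists (absz (Sc e - e)%R); lia.
rewrite Hd in ha.
case: (enter (negbT E) ha) => n [hn1 hn2].
case: (eqVneq n (Sc e)) => [En|hnS].
  by move: hne; rewrite -hn2 En eqxx.
rewrite hL hl -hn2.
have : L e <= L n by apply: succ_between; lia.
rewrite /clab; lia.
Qed.

Section Geo.
Variable eta : bool.
Variable gamma : nat -> vertex.
Hypothesis Hg : proper_geodesic_ray lab (Phi nch lab eta) gamma.

Lemma g0 : gamma 0 = [::].
Proof. by case: Hg. Qed.

Lemma glab i : lab (gamma i) = - i%:Z.
Proof. by case: Hg => _ [_ [h _]]. Qed.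

Lemma geo_step i : exists e : int, V e = gamma i /\ V (Sc e) = gamma i.+1.
Proof.
case: Hg => _ [_ [hl ha]].
case: (ha i) => k [[h1 h2]|[h1 h2]]; first by exists k.
exfalso; have := succ_lab k; rewrite /clab h1 h2 !hl; lia.
Qed.

Lemma anc_gamma i : anc_ok (gamma i).
Proof.
elim: i => [|i IH]; first by rewrite g0; exact: anc_ok_nil.
case: (geo_step i) => e [h1 h2]; rewrite -h2; apply: anc_ok_succ; by rewrite h1.
Qed.

End Geo.

Lemma L0 : L 0 = 0.
Proof. by rewrite /clab /cV /= Hlab0. Qed.

Lemma cmax_spec i : 0 <= cmax nch lab i /\ L (cmax nch lab i) = - i%:Z /\
  (forall c : int, 0 <= c -> c < cmax nch lab i -> - i%:Z < L c).
Proof.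
elim: i => [|i [h1 [h2 h3]]].
  split => //; split; first exact: L0.
  move=> c hc1 hc2; rewrite /cmax /= in hc2; lia.
have -> : cmax nch lab i.+1 = Sc (cmax nch lab i) by [].
have hgt := succ_gt (cmax nch lab i).
split; first lia.
split; first by rewrite succ_lab h2; lia.
move=> c hc1 hc2.
case: (ltrP c (cmax nch lab i)) => hc.
  have := h3 c hc1 hc; lia.
case: (eqVneq c (cmax nch lab i)) => [->|hne]; first by rewrite h2; lia.
have hlt : cmax nch lab i < c by lia.
have := succ_between hlt hc2; rewrite h2 => h; lia.
Qed.

Lemma cmax_lower i (c : int) : 0 <= c -> L c = - i%:Z -> cmax nch lab i <= c.
Proof.
move=> hc hl; case: (cmax_spec i) => _ [_ h3].
case: (lerP (cmax nch lab i) c) => // hlt.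
have := h3 c hc hlt; lia.
Qed.

Notation M i := (lastc nch (gmin nch lab i)).

Lemma gmin_spec i : V (M i) = gmin nch lab i /\ L (M i) = - i%:Z /\
  (forall m : nat, V m = gmin nch lab i -> (m <= M i)%N).
Proof.
elim: i => [|i [h1 [h2 h3]]].
  have h0 : V 0%N = gmin nch lab 0 by [].
  have [e1 e2] := lastc_spec h0.
  by split => //; split => //; rewrite /clab e1 /= Hlab0.
have Eg : gmin nch lab i.+1 = V (Sc (M i)) by [].
have hgt := succ_gt (M i).
have hN : Sc (M i) = (absz (Sc (M i)))%:Z by apply: nat_of_nonneg; lia.
have h0 : V (absz (Sc (M i))) = gmin nch lab i.+1 by rewrite Eg -hN.
have [e1 e2] := lastc_spec h0.
split => //; split => //.
rewrite /clab e1 Eg -/(clab nch lab _) succ_lab h2; lia.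
Qed.

Lemma gmin_succ_le i : Sc (M i) <= (M i.+1)%:Z.
Proof.
have hgt := succ_gt (M i).
have hN : Sc (M i) = (absz (Sc (M i)))%:Z by apply: nat_of_nonneg; lia.
have h0 : V (absz (Sc (M i))) = gmin nch lab i.+1 by rewrite -hN.
have [_ [_ h3]] := gmin_spec i.+1.
have := h3 _ h0; rewrite hN; lia.
Qed.

Lemma M_incr i j : (i < j)%N -> (M i < M j)%N.
Proof.
elim: j => [|j IH] // hij.
have h1 := gmin_succ_le j.
have h2 := succ_gt (M j).
have h : (M j < M j.+1)%N by lia.
move: hij; rewrite ltnS leq_eqVlt => /orP[/eqP ->|hij] //.
exact: ltn_trans (IH hij) h.
Qed.

Lemma anc_gmin i : anc_ok (gmin nch lab i).
Proof.
elim: i => [|i IH]; first exact: anc_ok_nil.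
have [h1 _] := gmin_spec i.
have -> : gmin nch lab i.+1 = V (Sc (M i)) by [].
apply: anc_ok_succ; by rewrite h1.
Qed.


Section Main.
Variable eta : bool.
Variable gamma : nat -> vertex.
Hypothesis Hg : proper_geodesic_ray lab (Phi nch lab eta) gamma.

Lemma part2 i j : (i < j)%N -> ~~ tpath [::] (gamma i) (gamma j).
Proof.
move=> hij; rewrite /tpath.
have -> : lcp [::] (gamma i) = [::] by case: (gamma i).
rewrite prefix0s andbT negb_or; apply/andP; split.
  rewrite prefixs0; apply/eqP => E.
  have := glab Hg j; rewrite E Hlab0; lia.
apply/negP => hp.
have hne : gamma j != gamma i.
  apply/eqP => E; have := glab Hg j; rewrite E (glab Hg); lia.
have := anc_gamma Hg hp hne; rewrite !(glab Hg); lia.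
Qed.

Lemma part1_upper i (c : nat) : V c = gamma i -> (c <= M i)%N.
Proof.
elim: i c => [|i IH] c hc.
  have [_ [_ h3]] := gmin_spec 0; apply: h3; by rewrite hc (g0 Hg).
case: (geo_step Hg i) => e [he1 he2].
have hLe : L e = - i%:Z by rewrite /clab he1 (glab Hg).
have [hgm1 [hgm2 hgm3]] := gmin_spec i.
have [hgn1 [hgn2 hgn3]] := gmin_spec i.+1.
case: (lerP 0 (Sc e)) => hse.
-
  have hle : Sc e <= Sc (M i).
    case: (lerP 0 e) => he.
      have hN := nat_of_nonneg he.
      have := IH (absz e); rewrite -hN => /(_ he1) hem.
      apply: succ_mono; first lia.
      by rewrite hLe hgm2.
    have hcm := cmax_spec i.+1.
    have hcl : cmax nch lab i.+1 <= Sc (M i).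
      apply: cmax_lower; first by have := succ_gt (M i); lia.
      by rewrite succ_lab hgm2; lia.
    apply: le_trans hcl; apply: succ_min; first lia.
    by case: hcm => _ [-> _]; rewrite hLe; lia.
  have hNle := gmin_succ_le i.
  case: (leqP c (M i.+1)) => // hlt; exfalso.
  have hN : Sc (M i) = (absz (Sc (M i)))%:Z.
    by apply: nat_of_nonneg; have := succ_gt (M i); lia.
  have hS : Sc e = (absz (Sc e))%:Z by apply: nat_of_nonneg.
  have hVN : V (absz (Sc (M i))) = gmin nch lab i.+1 by rewrite -hN.
  case: (eqVneq (gamma i.+1) (gmin nch lab i.+1)) => [Eq|hne].
    have := hgn3 c; rewrite hc Eq => /(_ erefl); rewrite leqNgt hlt //.
  have hb := @left_between (absz (Sc e)) (absz (Sc (M i))) c.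
  have : prefix (gamma i.+1) (gmin nch lab i.+1).
    rewrite -hVN -he2 hS; apply: hb; try lia.
    by rewrite -hS he2 hc.
  move=> hp.
  have hy : lab (gmin nch lab i.+1) = - (i.+1)%:Z by rewrite -hgn1; exact: hgn2.
  have := anc_gmin hp hne; rewrite hy (glab Hg); lia.
-
  exfalso.
  have hx : V c = V (Sc e) by rewrite hc he2.
  case: (left_right_spine hse hx (erefl _)) => t Et.
  have hse' : V (Sc e) = S t by rewrite -Et.
  have := right_spine_below hse hse' (ltW (succ_gt e)).
  rewrite he1 -hse' he2 => hp.
  have hne : gamma i.+1 != gamma i.
    apply/eqP => E; have := glab Hg i.+1; rewrite E (glab Hg); lia.
  have := anc_gamma Hg hp hne; rewrite !(glab Hg); lia.
Qed.


Lemma lab_gmin j : lab (gmin nch lab j) = - j%:Z.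
Proof. by have [h1 [h2 _]] := gmin_spec j; rewrite -h1; exact: h2. Qed.

Lemma tpath_nil x g : tpath [::] x g = prefix g x.
Proof.
rewrite /tpath; have -> : lcp [::] x = [::] by case: x.
rewrite prefix0s andbT; case: g => [|y g] /=; by rewrite ?prefix0s.
Qed.

Lemma tpath_sub g x z : prefix g x -> tpath g x z = (prefix z g || prefix z x) && prefix g z.
Proof. by move=> h; rewrite /tpath lcp_prefix. Qed.

Definition goodj i j := (j <= i)%N /\ prefix (gmin nch lab j) (gamma i) /\
  (forall x, prefix (gmin nch lab j) x -> prefix x (gamma i) -> x <> gmin nch lab j ->
     ~ (exists t, S t = x)).

Lemma goodj_uniq_aux i j1 j2 : (j1 < j2)%N -> goodj i j1 -> goodj i j2 -> False.
Proof.
move=> hj [_ [hp1 hs1]] [_ [hp2 _]].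
have hne : gmin nch lab j2 != gmin nch lab j1.
  apply/eqP => E; have := lab_gmin j2; rewrite E lab_gmin; lia.
case/orP: (prefix_total hp1 hp2) => hp.
- have hns : ~ (exists t, S t = gmin nch lab j2).
    by apply: hs1 => //; apply/eqP.
  have hM := M_incr hj.
  have [h1 _] := gmin_spec j1.
  have [h2 _] := gmin_spec j2.
  case: (classic (exists t, S t = gmin nch lab j1)) => [[s Es]|hoff].
  + have hM' : (lastc nch (S s) < M j2)%N by rewrite Es.
    have := after_last_spine hM'; rewrite h2 => hp'.
    apply: (hs1 (S s.+1)).
    * by rewrite -Es; apply: S_prefix.
    * exact: prefix_trans hp' hp2.
    * by rewrite -Es => /S_inj /eqP; rewrite eqn_leq ltnn.
    * by exists s.+1.
  + have := off_spine_after hoff h1 hM; by rewrite h2 hp.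
- have := anc_gmin hp hne; rewrite !lab_gmin; lia.
Qed.

Lemma part3 i : (exists c : int, 0 <= c /\ V c = gamma i) ->
  exists! j : nat, (j <= i)%N /\ tpath [::] (gamma i) (gmin nch lab j) /\
    (forall x, tpath (gmin nch lab j) (gamma i) x -> x <> gmin nch lab j ->
       ~ on_spine nch x).
Proof.
case=> c [hc0 hcV].
have hN := nat_of_nonneg hc0.
pose cn := absz c.
have hcn : V cn = gamma i by rewrite /cn -hN.
have hQ := part1_upper hcn.
suff [j hj] : exists j, goodj i j.
  exists j; split.
  - case: hj => [h1 [h2 h3]]; split => //; split; first by rewrite tpath_nil.
    move=> x; rewrite tpath_sub // => /andP [/orP [hx|hx] hgx] hne.
      by exfalso; apply: hne; apply: prefix_antisym.
    by move/on_spineE => [t Et]; apply: (h3 x) => //; exists t.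
  - move=> j' [h1 [h2 h3]].
    have hpj' : prefix (gmin nch lab j') (gamma i) by rewrite -tpath_nil.
    have hj' : goodj i j'.
      split => //; split => //.
      move=> x hgx hxg hne [t Et]; apply: (h3 x) => //.
        by rewrite tpath_sub // hxg orbT hgx.
      by apply/on_spineE; exists t.
    case: (ltngtP j j') => // h; exfalso.
      exact: goodj_uniq_aux h hj hj'.
    exact: goodj_uniq_aux h hj' hj.
have hex : exists j, (cn <= M j)%N by exists i.
case: (@ex_minnP (fun j => (cn <= M j)%N) hex) => j0 hj0 hmin.
exists j0.
have hj0i : (j0 <= i)%N := hmin _ hQ.
have [hg1 [hg2 hg3]] := gmin_spec j0.
have hpre : prefix (gmin nch lab j0) (gamma i).
  case: j0 hj0 hmin hj0i hg1 hg2 hg3 => [|j'] hj0 hmin hj0i hg1 hg2 hg3.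
    exact: prefix0s.
  have hlt : (M j' < cn)%N.
    by rewrite ltnNge; apply/negP => h; have := hmin _ h; rewrite ltnn.
  have [hh1 [hh2 _]] := gmin_spec j'.
  have hgt := succ_gt (M j').
  have hNN : Sc (M j') = (absz (Sc (M j')))%:Z by apply: nat_of_nonneg; lia.
  have hNc : Sc (M j') <= cn%:Z.
    case: (lerP (Sc (M j')) cn%:Z) => // hc'.
    have hlt' : (M j')%:Z < cn%:Z by lia.
    have := succ_between hlt' hc'; rewrite hh2.
    have : L cn = - i%:Z by rewrite /clab hcn (glab Hg).
    move=> ->; lia.
  have hVN : V (absz (Sc (M j'))) = gmin nch lab j'.+1 by rewrite -hNN.
  rewrite -hcn -hVN; apply: left_between; first lia.
    exact: hj0.
  by rewrite hVN hg1.
split => //; split => // x hgx hxi hne [s Es].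
have hs' : gmin nch lab j0 = S (size (gmin nch lab j0)).
  by apply: (prefix_S (t:=s)); rewrite Es.
have hsz : (size (gmin nch lab j0) < s)%N.
  have := size_prefix hgx; rewrite -Es size_S leq_eqVlt => /orP [/eqP E|] //.
  by exfalso; apply: hne; rewrite hs' E Es.
have hp2 : prefix (S (size (gmin nch lab j0)).+1) (V cn).
  rewrite hcn; apply: prefix_trans hxi; rewrite -Es; exact: S_prefix.
have := spine_before_desc (_ : V (M j0) = S (size (gmin nch lab j0))) hp2.
rewrite -hs'; move=> /(_ hg1) h.
by move: hj0; rewrite leqNgt h.
Qed.


Lemma main_all :
  [/\ (forall (i : nat) (c : int), 0 <= c -> cV nch c = gamma i ->
         cmax nch lab i <= c <= cmin nch lab i),
      (forall i j : nat, (i < j)%N -> ~~ tpath [::] (gamma i) (gamma j))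
    & (forall i : nat, (exists c : int, 0 <= c /\ cV nch c = gamma i) ->
         exists! j : nat, (j <= i)%N /\ tpath [::] (gamma i) (gmin nch lab j) /\
           (forall x, tpath (gmin nch lab j) (gamma i) x -> x <> gmin nch lab j ->
              ~ on_spine nch x))].
Proof using Hray Huniq Hlab0 Hedge Hinf Hg.
split.
- move=> i c hc hV; apply/andP; split.
    by apply: cmax_lower => //; rewrite /clab hV (glab Hg).
  have hN := nat_of_nonneg hc.
  have hV' : V (absz c) = gamma i by rewrite -hN.
  have := part1_upper hV'; rewrite /cmin hN; lia.
- exact: part2.
- exact: part3.
Qed.

End Main.

End Tree.

Unset Implicit Arguments.

Theorem lemma2 (nch : vertex -> nat) (lab : vertex -> int) (eta : bool)
    (gamma : nat -> vertex) :
  in_S nch lab ->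
  proper_geodesic_ray lab (Phi nch lab eta) gamma ->
  [/\ (* 1. *)
      (forall (i : nat) (c : int), 0 <= c -> cV nch c = gamma i ->
         cmax nch lab i <= c <= cmin nch lab i),
      (* 2. *)
      (forall i j : nat, (i < j)%N -> ~~ tpath [::] (gamma i) (gamma j))
    & (* 3. *)
      (forall i : nat, (exists c : int, 0 <= c /\ cV nch c = gamma i) ->
         exists! j : nat, (j <= i)%N /\ tpath [::] (gamma i) (gmin nch lab j) /\
           (forall x, tpath (gmin nch lab j) (gamma i) x -> x <> gmin nch lab j ->
              ~ on_spine nch x))].
Proof.
move=> [H0 [Hed [S [Hray [Huniq Hinf]]]]] Hg.
exact: (main_all Hray Huniq H0 Hed Hinf Hg).
Qed.
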